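(* The cycle $C_3\cong K_3$ is not a strict prime $k$th-power distance graph for any integer $k\ge 2$.
   Context: A graph $G$ is a strict prime $k$th-power distance graph if there is an injective map $L:V(G)\to\mathbb{Z}$ such that for every edge $uv$ of $G$, $|L(u)-L(v)|=p^k$ for some prime $p$ (the prime may depend on the edge). *)

(* Defs.v *)
From mathcomp Require Import all_boot all_order all_algebra.
Set Implicit Arguments. Unset Strict Implicit. Unset Printing Implicit Defensive.
Import Order.TTheory GRing.Theory Num.Theory.
Local Open Scope ring_scope.

(* A simple graph on a finite vertex type T is given by an adjacency relation
   e (assumed symmetric and irreflexive where relevant). *)
Definition strict_prime_kth_power_distance_graph (T : finType) (e : rel T) (k : nat) : Prop :=
  exists L : T -> int, injective L /\
    forall u v : T, e u v -> exists p : nat, prime p /\ `|L u - L v| = (p ^ k)%:Z.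

Definition complete_graph (n : nat) : rel 'I_n := fun u v => u != v.
Arguments complete_graph n : clear implicits.
Arguments strict_prime_kth_power_distance_graph T e k : clear implicits.

(* Main.v *)
Require Import Defs.
From mathcomp Require Import all_boot all_order all_algebra zify.
Import Order.TTheory GRing.Theory Num.Theory.

Lemma binlt (y k : nat) : 0 < y -> 2 ^ (k.+2) + y ^ (k.+2) < (y + 2) ^ (k.+2).
Proof.
move=> y0; elim: k => [|k IH]; first by rewrite !expnS !expn0; nia.
rewrite (expnS 2) (expnS y) (expnS (y+2)).
have h1 : 0 < y ^ k.+2 by rewrite expn_gt0 y0.
nia.
Qed.

Lemma noflt (x y z k : nat) : prime x -> prime y -> prime z -> 2 <= k ->
  x ^ k + y ^ k = z ^ k -> False.
Proof.
move=> px py pz k2 E.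
have k0 : 0 < k by lia.
have x2 := prime_gt1 px; have y2 := prime_gt1 py.
have xz : x < z.
  rewrite -(ltn_exp2r _ _ k0) -E. have : 0 < y ^ k by rewrite expn_gt0; lia. lia.
have yz : y < z.
  rewrite -(ltn_exp2r _ _ k0) -E. have : 0 < x ^ k by rewrite expn_gt0; lia. lia.
have oz : odd z.
  case: (even_prime pz) => [e|//]; lia.
have Eo : odd x (+) odd y = true.
  have := congr1 odd E; rewrite oddD !oddX oz.
  have -> : (k == 0) = false by lia.
  by [].
have key : forall a b, prime a -> odd b -> b < z -> a ^ k + b ^ k = z ^ k -> odd a = false -> False.
  move=> a b pa ob bz Eab oa.
  have a2 : a = 2 by case: (even_prime pa) => //; rewrite oa.
  subst a.
  have bz2 : b + 2 <= z.
    have : odd (z - b) = false by rewrite oddB ?oz ?ob //; lia.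
    move=> h. have : z - b != 1 by apply/eqP=> e; rewrite e in h. lia.
  have b0 : 0 < b by case: b ob {bz Eab bz2}.
  have := @binlt b (k - 2) b0. rewrite (_ : (k-2).+2 = k); last by lia.
  have : (b + 2) ^ k <= z ^ k by rewrite leq_exp2r.
  lia.
case ox: (odd x); case oy: (odd y); rewrite ?ox ?oy in Eo => //.
- by apply: (key y x) => //; lia.
- by apply: (key x y) => //; lia.
Qed.

Lemma tri (u v : int) (X Y Z : nat) : (`|u| = X%:Z -> `|v| = Y%:Z -> `|u+v| = Z%:Z ->
  (Z = X + Y \/ X = Y + Z \/ Y = X + Z))%R.
Proof. move=> h1 h2 h3. lia. Qed.

Theorem mainTheorem11 (k : nat) : (2 <= k)%N ->
  ~ strict_prime_kth_power_distance_graph _ (complete_graph 3) k.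
Proof.
move=> k2 [L [_ H]].
have [p [pp Ep]] := H (0%R : 'I_3) (1%R : 'I_3) isT.
have [q [pq Eq]] := H (1%R : 'I_3) (2%R : 'I_3) isT.
have [r [pr Er]] := H (0%R : 'I_3) (2%R : 'I_3) isT.
have e : (L 0%R - L 2%R = (L 0%R - L 1%R) + (L 1%R - L 2%R))%R by rewrite addrA subrK.
rewrite e in Er.
case: (@tri _ _ _ _ _ Ep Eq Er) => [h|[h|h]].
- by apply: (@noflt p q r k) => //; rewrite h.
- by apply: (@noflt q r p k) => //; rewrite h.
- by apply: (@noflt p r q k) => //; rewrite h.
Qed.
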